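(* Let $W\in[0,1]^{k\times k}$ be a symmetric positive semidefinite matrix with unit diagonal, $\mu>0$, and consider linear utilities $u_i({\boldsymbol\theta})=W_i^\top{\boldsymbol\theta}$ ($W_i$ the $i$-th column of $W$) with thresholds $\mu_i=\mu$ and strategy space $\mathbb{R}_+^k$. Let ${\boldsymbol\theta}^{\mathrm{eq}}$ be an optimal stable equilibrium, $I=\{i:\theta^{\mathrm{eq}}_i=0\}$, and $\bar W,\bar{\boldsymbol\theta}^{\mathrm{eq}}$ the restrictions of $W$ (rows and columns) and ${\boldsymbol\theta}^{\mathrm{eq}}$ to $[k]\setminus I$. Then $\bar{\boldsymbol\theta}^{\mathrm{eq}}$ is an optimal solution of $\min_{\bf x}\{\mathbf{1}^\top{\bf x}:\bar W{\bf x}\ge\mu\mathbf{1},\ {\bf x}\ge\mathbf{0}\}$.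
   Context: ${\boldsymbol\theta}$ is feasible if $u_i({\boldsymbol\theta})\ge\mu$ for all $i$. A feasible ${\boldsymbol\theta}\in\mathbb{R}_+^k$ is a stable equilibrium if for no $i$ is there $0\le\theta_i'<\theta_i$ with $u_i(\theta_i',{\boldsymbol\theta}_{-i})\ge\mu$ (${\boldsymbol\theta}$ with $i$-th entry replaced). An optimal stable equilibrium minimizes $\mathbf{1}^\top{\boldsymbol\theta}$ among stable equilibria. *)

(* Defs.v *)
From HB Require Import structures.
From mathcomp Require Import all_boot all_order all_algebra.
From mathcomp Require Import reals.
Set Implicit Arguments. Unset Strict Implicit. Unset Printing Implicit Defensive.
Import Order.TTheory GRing.Theory Num.Theory.
Local Open Scope ring_scope.

Section Game.
Variables (R : realType) (k : nat) (W : 'M[R]_k) (mu : R).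

Definition util (theta : 'cV[R]_k) (i : 'I_k) : R := \sum_(j < k) W j i * theta j 0.

Definition nonneg_vec (theta : 'cV[R]_k) : Prop := forall i, 0 <= theta i 0.

Definition feasible (theta : 'cV[R]_k) : Prop := forall i, mu <= util theta i.

Definition repl (theta : 'cV[R]_k) (i : 'I_k) (t : R) : 'cV[R]_k :=
  \col_j (if j == i then t else theta j 0).

Definition stable_eq (theta : 'cV[R]_k) : Prop :=
  nonneg_vec theta /\ feasible theta /\
  forall i (t : R), 0 <= t -> t < theta i 0 -> ~ (mu <= util (repl theta i t) i).

Definition total (theta : 'cV[R]_k) : R := \sum_(i < k) theta i 0.

Definition optimal_stable_eq (theta : 'cV[R]_k) : Prop :=
  stable_eq theta /\ forall theta', stable_eq theta' -> total theta <= total theta'.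

End Game.

Definition psd (R : realType) (k : nat) (W : 'M[R]_k) : Prop :=
  forall x : 'cV[R]_k, 0 <= (x^T *m W *m x) 0 0.

(* Main.v *)
Require Import Defs.
From HB Require Import structures.
From mathcomp Require Import all_boot all_order all_algebra.
From mathcomp Require Import reals.
From mathcomp Require Import lra.
Import Order.TTheory GRing.Theory Num.Theory.
Local Open Scope ring_scope.

Theorem lemma2 (R : realType) (k : nat) (W : 'M[R]_k) (mu : R)
  (W01 : forall i j, 0 <= W i j <= 1)
  (Wsym : W^T = W)
  (Wpsd : psd W)
  (Wdiag : forall i, W i i = 1)
  (mu_pos : 0 < mu)
  (theta : 'cV[R]_k)
  (Hopt : optimal_stable_eq W mu theta) :
  let J := [set i : 'I_k | theta i 0 != 0] in
  ((forall j, j \in J -> 0 <= theta j 0) /\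
   (forall j, j \in J -> mu <= \sum_(l in J) W j l * theta l 0)) /\
  (forall x : 'I_k -> R,
     (forall j, j \in J -> 0 <= x j) ->
     (forall j, j \in J -> mu <= \sum_(l in J) W j l * x l) ->
     \sum_(j in J) theta j 0 <= \sum_(j in J) x j).
Proof.
move=> J.
have Ws : forall i j, W i j = W j i by move=> i j; rewrite -{1}Wsym mxE.
case: Hopt => [[Hnn [Hfeas Hstab]] _].
have restr : forall j, \sum_(l in J) W j l * theta l 0 = \sum_l W j l * theta l 0.
  move=> j; rewrite big_mkcond /=; apply: eq_bigr => l _.
  case: ifP => //; rewrite inE => /negbFE/eqP ->; by rewrite mulr0.
have utilE : forall j, util W theta j = \sum_l W j l * theta l 0.
  by move=> j; rewrite /util; apply: eq_bigr => l _; rewrite Ws.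
have replE : forall i t, util W (repl theta i t) i = util W theta i + (t - theta i 0).
  move=> i t; rewrite /util (bigD1 i) //= [in RHS](bigD1 i) //= !mxE eqxx Wdiag.
  rewrite !mul1r.
  have -> : \sum_(j < k | j != i) W j i * (repl theta i t) j 0 =
            \sum_(j < k | j != i) W j i * theta j 0.
    by apply: eq_bigr => j /negbTE H; rewrite mxE H.
  lra.
have eqmu : forall j, j \in J -> \sum_(l in J) W j l * theta l 0 = mu.
  move=> j jJ; rewrite restr -utilE.
  have pos : 0 < theta j 0.
    by move: jJ; rewrite inE => jJ; rewrite lt_def jJ Hnn.
  apply/eqP; rewrite eq_le Hfeas andbT; apply/negP => /negP; rewrite -ltNge => Hlt.
  set d := util W theta j - mu.
  apply: (Hstab j (Num.max 0 (theta j 0 - d))).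
  - by rewrite le_max lexx.
  - rewrite gt_max pos /=; rewrite /d; lra.
  - rewrite replE; have : theta j 0 - d <= Num.max 0 (theta j 0 - d) by rewrite le_max lexx orbT.
    rewrite /d; lra.
split.
  split; first by move=> j _; exact: Hnn.
  by move=> j jJ; rewrite eqmu.
move=> x xnn xfeas.
rewrite -(ler_pM2r mu_pos) !big_distrl /=.
have step1 : \sum_(i in J) theta i 0 * mu <= \sum_(i in J) theta i 0 * \sum_(l in J) W i l * x l.
  by apply: ler_sum => i iJ; apply: ler_wpM2l; [exact: Hnn | exact: xfeas].
apply: (le_trans step1).
rewrite le_eqVlt; apply/orP; left; apply/eqP.
transitivity (\sum_(i in J) \sum_(l in J) theta i 0 * (W i l * x l)).
  by apply: eq_bigr => i _; rewrite big_distrr.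
rewrite exchange_big /=; apply: eq_bigr => l lJ.
rewrite -(eqmu l lJ) mulrC big_distrl /=; apply: eq_bigr => i iJ.
by rewrite (Ws i l); lra.
Qed.
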